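(* Let $G$ be a finite group of order greater than $1$ and let $q$ be the smallest prime divisor of $|G|$. Then ${\rm mf}_{pp}(G)\leq q$ if and only if $\mathcal{F}_{pp}(G)=\{1\}$ or $\mathcal{F}_{pp}(G)=\{1,q\}$.
   Context: All groups are finite. For a group $G$ and a positive integer $n$ dividing $|G|$, let $F_n(G)=\{g\in G\mid g^n=1\}$. By Frobenius' theorem $|F_n(G)|=f_n\cdot n$ for a positive integer $f_n$, called the Frobenius quotient of $G$ for $n$. ${\rm exp}(G)$ denotes the exponent of $G$. A prime-power divisor of ${\rm exp}(G)$ is a positive divisor $n$ of ${\rm exp}(G)$ of the form $n=p^k$ with $p$ prime and $k\geq 0$ (so $n=1$ is included). $\mathcal{F}_{pp}(G)=\{f_n\mid n \text{ is a prime-power divisor of } {\rm exp}(G)\}$ and ${\rm mf}_{pp}(G)$ is the maximum element of $\mathcal{F}_{pp}(G)$. *)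

(* Defs.v *)
From mathcomp Require Import all_boot all_fingroup all_solvable.
Set Implicit Arguments. Unset Strict Implicit. Unset Printing Implicit Defensive.
Open Scope group_scope.

Definition Fset (gT : finGroupType) (G : {group gT}) (n : nat) : {set gT} :=
  [set g in G | g ^+ n == 1].

(* Frobenius quotient f_n = |F_n(G)| / n (exact division when n divides |G|,
   by Frobenius' theorem). *)
Definition frob (gT : finGroupType) (G : {group gT}) (n : nat) : nat :=
  #|Fset G n| %/ n.

Definition is_ppow (n : nat) : bool :=
  (n == 1%N) || [exists p : 'I_n.+1, prime p && (n == p ^ logn p n)%N].

Definition ppdivs (gT : finGroupType) (G : {group gT}) : seq nat :=
  [seq n <- divisors (exponent G) | is_ppow n].

(* F_pp(G) as a finite list of values (membership = the set) *)
Definition Fpp (gT : finGroupType) (G : {group gT}) : seq nat :=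
  [seq frob G n | n <- ppdivs G].

Definition mfpp (gT : finGroupType) (G : {group gT}) : nat :=
  \max_(n <- ppdivs G) frob G n.

(* Main.v *)
Require Import Defs.
From mathcomp Require Import all_boot all_fingroup all_solvable.
From mathcomp Require Import zify.

Section Helpers.
Local Open Scope nat_scope.

Lemma Fset_Ldiv (gT : finGroupType) (G : {group gT}) n : Fset G n = 'Ldiv_n(G).
Proof. by apply/setP=> x; rewrite !inE. Qed.

Lemma Fset1 (gT : finGroupType) (G : {group gT}) n : 1%g \in Fset G n.
Proof. by rewrite inE group1 expg1n eqxx. Qed.

Lemma card_Fset_mod (gT : finGroupType) (G : {group gT}) p k :
  prime p -> p.-1 %| #|Fset G (p ^ k) :\ 1%g|.
Proof.
move=> pr_p; set A := _ :\ _.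
rewrite -sum1_card (partition_big_imset (@cycle _)) /=.
apply: dvdn_sum => _ /imsetP[x Ax ->].
rewrite (eq_bigl (generator <[x]>)) => [|y].
  rewrite sum1dep_card -totient_gen.
  move: Ax; rewrite !inE => /andP[nx1 /andP[Gx]].
  rewrite -order_dvdn => /(dvdn_pfactor _ _ pr_p)[j _ oj].
  have j0 : 0 < j.
    rewrite lt0n; apply: contra nx1 => /eqP j0.
    by rewrite -order_eq1 oj j0.
  by rewrite oj totient_pfactor // dvdn_mulr.
rewrite /generator eq_sym andbC; case xy: {+}(_ == _) => //.
have eq_o : #[y] = #[x] by rewrite /order (eqP xy).
move: Ax; rewrite !inE -!order_dvdn -!order_eq1 eq_o => /andP[-> /andP[Gx ->]].
by rewrite -cycle_subG -(eqP xy) cycle_subG Gx.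
Qed.

Lemma arith_f f p : 0 < f -> f < p -> f = 1 %[mod p.-1] -> f = 1.
Proof.
move=> f0 fp; case: p fp => // [[|[|p]]] fp //=; first by lia.
have [-> | fne] := eqVneq f p.+2.
  by rewrite modnn modn_small.
by rewrite !modn_small //; lia.
Qed.

Lemma key (gT : finGroupType) (G : {group gT}) n :
  n \in ppdivs G -> frob G n = 1%N \/ (pdiv #|G| <= frob G n)%N.
Proof.
rewrite mem_filter => /andP[pp]; rewrite -dvdn_divisors ?exponent_gt0 // => nE.
have [->|n1] := eqVneq n 1.
  left; rewrite /frob divn1; have -> : Fset G 1 = [set 1%g]; last exact: cards1.
  by apply/setP=> x; rewrite !inE expg1 andb_idl // => /eqP->.
move: pp => /orP[/eqP n1' | ]; first by rewrite n1' eqxx in n1.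
case/existsP=> -[p /= _] /andP[pr_p /eqP nk].
set k := logn p n in nk.
have nG : n %| #|G| := dvdn_trans nE (exponent_dvdn G).
have frobD := Frobenius_Ldiv nG; rewrite -Fset_Ldiv in frobD.
have n0 : 0 < n by rewrite nk expn_gt0 prime_gt0.
have := cardsD1 1%g (Fset G n); rewrite Fset1 => cardE.
have f0 : 0 < frob G n.
  by rewrite /frob divn_gt0 // dvdn_leq // cardE.
have fmod : frob G n = 1 %[mod p.-1].
  have pk : n = 1 %[mod p.-1].
    rewrite nk -modnXm.
    have -> : p %% p.-1 = 1 %% p.-1.
      by rewrite -{1}(prednK (prime_gt0 pr_p)) -addn1 -modnDml modnn add0n.
    by rewrite modnXm exp1n.
  have := @card_Fset_mod _ G p k pr_p; rewrite -nk => /dvdnP[m hm].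
  rewrite -(muln1 (frob G n)) -modnMm -pk modnMm /frob divnK //.
  by rewrite cardE hm add1n -addn1 modnMDl.
have [fq | qf] := ltnP (frob G n) (pdiv #|G|); [left | by right].
apply: arith_f f0 _ fmod; apply: (leq_trans fq); apply: pdiv_min_dvd (prime_gt1 pr_p) _.
apply: dvdn_trans nG; rewrite nk.
case: k nk => [|k] nk; last by rewrite expnS dvdn_mulr.
by rewrite nk in n1.
Qed.
End Helpers.

Theorem corollary1p2 (gT : finGroupType) (G : {group gT}) :
  (1 < #|G|)%N ->
  let q := pdiv #|G| in
  (mfpp G <= q)%N <->
  (Fpp G =i [:: 1%N] \/ Fpp G =i [:: 1%N; q]).
Proof.
move=> G1 q.
have q0 : (0 < q)%N by rewrite pdiv_gt0.
have onein : (1 \in ppdivs G)%N.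
  by rewrite mem_filter /is_ppow eqxx /= -dvdn_divisors ?exponent_gt0 ?dvd1n.
have f1 : frob G 1 = 1%N.
  rewrite /frob divn1; have -> : Fset G 1 = [set 1%g]; last exact: cards1.
  by apply/setP=> x; rewrite !inE expg1 andb_idl // => /eqP->.
have oneF : (1 \in Fpp G)%N by rewrite -f1; apply: map_f.
split.
  move=> mq.
  have memP x : x \in Fpp G -> x = 1%N \/ x = q.
    case/mapP=> n nin ->; have := @leq_bigmax_seq _ _ xpredT (fun n => frob G n) n nin isT.
    rewrite -/(mfpp G) => le; have [->|qf] := @key _ G n nin; first by left.
    by right; apply/eqP; rewrite eqn_leq qf (leq_trans le mq).
  case: (boolP (q \in Fpp G)) => qin; [right|left] => x; rewrite !inE.
    apply/idP/idP => [/memP[->|->]|]; rewrite ?eqxx ?orbT //.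
    by case/orP=> /eqP->.
  apply/idP/idP => [xin|/eqP->//]; case: (memP x xin) => [->//|xq].
  by move: xin; rewrite xq (negPf qin).
move=> H; apply/bigmax_leqP_seq => n nin _.
have : frob G n \in Fpp G by apply: map_f.
case: H => ->; rewrite !inE; first by move/eqP->. 
by case/orP=> /eqP->.
Qed.
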